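(* Let $c_0\ge0$, $c_1>0$, $a<0$, $v_\circ\ge0$ with $c_0^2+4ac_1<0$, let $v$ solve $v'=a-c_0v-c_1v^2$, $v(0)=v_\circ$, and $s(t)=\int_0^tv$. Let $\ell_1=\sqrt{c_1(A_0+|a|)}$ and let $\theta_1\in(0,\pi/2]$ be defined by $\cos\theta_1=\frac{2c_1v_\circ+c_0}{2\ell_1}$, $\sin\theta_1=\frac{|w|}{2\ell_1}$. Then for all $t\neq 0$ in the interval of existence, $$s(t)=(A_0+|a|)\,t^2\,Q(t\ell_1,\cos\theta_1)+v_\circ t,$$ where $Q(\tau,c)=\frac1{\tau^2}\log\Big(\frac{c}{\sigma}\sin(\tau\sigma)+\cos(\tau\sigma)\Big)-\frac c\tau$ with $\sigma=\sqrt{1-c^2}$. Moreover, for $c\in[0,1]$ and $0<|\tau|\le 0.001$, $$Q(\tau,c)=-\frac12+\frac{c\tau}3-\frac{2c^2+1}{12}\tau^2+\frac{c^2+2}{15}c\tau^3-\frac{2c^4+11c^2+2}{90}\tau^4+\frac{2c^4+26c^2+17}{315}c\tau^5-\varepsilon(\tau,c)$$ with $|\varepsilon(\tau,c)|\le10^{-18}$.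
   Context: $|w|=\sqrt{-(c_0^2+4ac_1)}$, $A_0=(c_1v_\circ+c_0)v_\circ$. For $c=1$ (i.e. $\sigma=0$) the expression $\frac{c}{\sigma}\sin(\tau\sigma)$ is understood as its limit $\tau$. *)

(* Defs.v *)
From Stdlib Require Import Reals Lra.
Open Scope R_scope.

Definition absw (a c0 c1 : R) : R := sqrt (- (c0 ^ 2 + 4 * a * c1)).

Definition A0 (c0 c1 v0 : R) : R := (c1 * v0 + c0) * v0.

Definition ell1 (a c0 c1 v0 : R) : R := sqrt (c1 * (A0 c0 c1 v0 + Rabs a)).

Definition cos_theta1 (a c0 c1 v0 : R) : R :=
  (2 * c1 * v0 + c0) / (2 * ell1 a c0 c1 v0).
Definition sin_theta1 (a c0 c1 v0 : R) : R :=
  absw a c0 c1 / (2 * ell1 a c0 c1 v0).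

Definition sigmaQ (c : R) : R := sqrt (1 - c ^ 2).

(* (c/sigma) sin(tau sigma), understood as its limit tau when sigma = 0 *)
Definition csin (tau c : R) : R :=
  if Req_dec_T (sigmaQ c) 0 then tau
  else c / sigmaQ c * sin (tau * sigmaQ c).

Definition Q (tau c : R) : R :=
  / tau ^ 2 * ln (csin tau c + cos (tau * sigmaQ c)) - c / tau.

Definition Qpoly (tau c : R) : R :=
  - / 2 + c * tau / 3 - (2 * c ^ 2 + 1) / 12 * tau ^ 2
  + (c ^ 2 + 2) / 15 * c * tau ^ 3
  - (2 * c ^ 4 + 11 * c ^ 2 + 2) / 90 * tau ^ 4
  + (2 * c ^ 4 + 26 * c ^ 2 + 17) / 315 * c * tau ^ 5.

(* Main.v *)
Require Import Defs.
From Stdlib Require Import Reals Lra Lia.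
From Coquelicot Require Import Coquelicot.
Open Scope R_scope.

Lemma cont_of_der f x l : is_derive f x l -> continuity_pt f x.
Proof. intro H. apply is_derive_Reals in H. apply derivable_continuous_pt. exists l. exact H. Qed.

Lemma integ_pos (g g' : R -> R) (A B : R) (n : nat) (s : R) :
  0 <= s -> (forall x, 0 <= x <= s -> is_derive g x (g' x)) ->
  (forall x, 0 <= x <= s -> Rabs (g' x) <= A * x ^ n + B) ->
  Rabs (g s - g 0) <= A * s ^ (S n) / INR (S n) + B * s.
Proof.
  intros Hs Hd Hb.
  assert (HN : 0 < INR (S n)) by apply lt_0_INR, Nat.lt_0_succ.
  set (P := fun x => A * x ^ (S n) / INR (S n) + B * x).
  assert (HP : forall x, is_derive P x (A * x ^ n + B)).
  { intro x. unfold P. auto_derive. auto. replace (match n with 0%nat => 1 | S _ => INR n + 1 end) with (INR (S n)) by reflexivity. field. lra. }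
  destruct (Req_dec s 0) as [->|Hs0].
  { rewrite Rminus_diag, Rabs_R0. simpl. lra. }
  assert (Hmin : Rmin 0 s = 0) by (apply Rmin_left; lra).
  assert (Hmax : Rmax 0 s = s) by (apply Rmax_right; lra).
  apply Rabs_le; split.
  - destruct (MVT_gen (fun x => g x + P x) 0 s (fun x => g' x + (A * x ^ n + B))) as [xi [Hxi Heq]].
    + intros x Hx. rewrite Hmin, Hmax in Hx. exact (is_derive_plus g P x _ _ (Hd x ltac:(lra)) (HP x)).
    + intros x Hx. rewrite Hmin, Hmax in Hx. eapply cont_of_der. exact (is_derive_plus g P x _ _ (Hd x ltac:(lra)) (HP x)).
    + rewrite Hmin, Hmax in Hxi. specialize (Hb xi Hxi). apply Rabs_le_between in Hb.
      assert (0 <= (g' xi + (A * xi ^ n + B)) * (s - 0)) by (apply Rmult_le_pos; lra).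
      unfold P in Heq. rewrite pow_i in Heq by lia. unfold P, Rdiv in *. rewrite ?Rmult_0_l, ?Rmult_0_r in Heq. lra.
  - destruct (MVT_gen (fun x => g x - P x) 0 s (fun x => g' x - (A * x ^ n + B))) as [xi [Hxi Heq]].
    + intros x Hx. rewrite Hmin, Hmax in Hx. exact (is_derive_minus g P x _ _ (Hd x ltac:(lra)) (HP x)).
    + intros x Hx. rewrite Hmin, Hmax in Hx. eapply cont_of_der. exact (is_derive_minus g P x _ _ (Hd x ltac:(lra)) (HP x)).
    + rewrite Hmin, Hmax in Hxi. specialize (Hb xi Hxi). apply Rabs_le_between in Hb.
      assert ((g' xi - (A * xi ^ n + B)) * (s - 0) <= 0).
      { apply Rmult_le_0_r; lra. }
      unfold P in Heq. rewrite pow_i in Heq by lia. unfold P, Rdiv in *. rewrite ?Rmult_0_l, ?Rmult_0_r in Heq. lra.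
Qed.

Lemma integ_sym (g g' : R -> R) (T A B : R) (n : nat) :
  (forall s, Rabs s <= T -> is_derive g s (g' s)) -> g 0 = 0 ->
  (forall s, Rabs s <= T -> Rabs (g' s) <= A * Rabs s ^ n + B) ->
  forall s, Rabs s <= T -> Rabs (g s) <= A * Rabs s ^ (S n) / INR (S n) + B * Rabs s.
Proof.
  intros Hd H0 Hb s Hs.
  destruct (Rle_dec 0 s) as [Hp|Hn].
  - rewrite (Rabs_right s) by lra.
    replace (g s) with (g s - g 0) by (rewrite H0; ring).
    apply (integ_pos g g'); auto.
    + intros x Hx. apply Hd. rewrite Rabs_right in Hs |- *; lra.
    + intros x Hx. replace (A * x ^ n + B) with (A * Rabs x ^ n + B) by (rewrite Rabs_right; lra). apply Hb. rewrite Rabs_right in Hs |- *; lra.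
  - rewrite (Rabs_left s) by lra. rewrite (Rabs_left s) in Hs by lra.
    replace (g s) with ((fun x => g (-x)) (-s) - (fun x => g (-x)) 0)
      by (simpl; rewrite Ropp_0, H0, Ropp_involutive; ring).
    apply (integ_pos (fun x => g (-x)) (fun x => - g' (-x))); [lra| |].
    + intros x Hx. replace (- g' (-x)) with ((-1) * g' (-x)) by ring.
      apply (is_derive_comp g (fun y => -y) x (g' (-x)) (-1)).
      * apply Hd. rewrite Rabs_left1; lra.
      * auto_derive; auto.
    + intros x Hx. rewrite Rabs_Ropp. replace x with (Rabs (-x)) at 2 by (rewrite Rabs_left1; lra).
      apply Hb. rewrite Rabs_left1; lra.
Qed.


Lemma atom_bd s c (m j : nat) : Rabs s <= 1 -> 0 <= c <= 1 -> -1 <= s ^ m * c ^ j <= 1.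
Proof.
  intros Hs Hc. apply Rabs_le_between. rewrite Rabs_mult, <- !RPow_abs.
  rewrite (Rabs_right c) by lra.
  assert (H1 : Rabs s ^ m <= 1) by (rewrite <- (pow1 m); apply pow_incr; split; [apply Rabs_pos|lra]).
  assert (H2 : c ^ j <= 1) by (rewrite <- (pow1 j); apply pow_incr; lra).
  assert (0 <= Rabs s ^ m) by (apply pow_le, Rabs_pos).
  assert (0 <= c ^ j) by (apply pow_le; lra).
  nra.
Qed.
Definition G1Q (c s : R) : R := (1) * (s ^ 0 * c ^ 1) + (-1) * (s ^ 1 * c ^ 0) + (1) * (s ^ 2 * c ^ 1) + (-1/3) * (s ^ 3 * c ^ 0) + (-2/3) * (s ^ 3 * c ^ 2) + (2/3) * (s ^ 4 * c ^ 1) + (1/3) * (s ^ 4 * c ^ 3) + (-2/15) * (s ^ 5 * c ^ 0) + (-11/15) * (s ^ 5 * c ^ 2) + (-2/15) * (s ^ 5 * c ^ 4) + (17/45) * (s ^ 6 * c ^ 1) + (26/45) * (s ^ 6 * c ^ 3) + (2/45) * (s ^ 6 * c ^ 5).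
Definition G2Q (c s : R) : R := (-1) * (s ^ 0 * c ^ 0) + (2) * (s ^ 1 * c ^ 1) + (-1) * (s ^ 2 * c ^ 0) + (-2) * (s ^ 2 * c ^ 2) + (8/3) * (s ^ 3 * c ^ 1) + (4/3) * (s ^ 3 * c ^ 3) + (-2/3) * (s ^ 4 * c ^ 0) + (-11/3) * (s ^ 4 * c ^ 2) + (-2/3) * (s ^ 4 * c ^ 4) + (34/15) * (s ^ 5 * c ^ 1) + (52/15) * (s ^ 5 * c ^ 3) + (4/15) * (s ^ 5 * c ^ 5).
Definition g1rQ (c s : R) : R := (1) * (s ^ 0 * c ^ 1) + (-1/3) * (s ^ 1 * c ^ 0) + (-2/3) * (s ^ 1 * c ^ 2) + (2/3) * (s ^ 2 * c ^ 1) + (1/3) * (s ^ 2 * c ^ 3) + (-2/15) * (s ^ 3 * c ^ 0) + (-11/15) * (s ^ 3 * c ^ 2) + (-2/15) * (s ^ 3 * c ^ 4) + (17/45) * (s ^ 4 * c ^ 1) + (26/45) * (s ^ 4 * c ^ 3) + (2/45) * (s ^ 4 * c ^ 5).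
Definition p0Q (c : R) : R := (-17/45) * c ^ 0 + (-4) * c ^ 2 + (-38/15) * c ^ 4 + (-4/45) * c ^ 6.
Definition rho1Q (c s : R) : R := (22/15) * (s ^ 0 * c ^ 1) + (56/15) * (s ^ 0 * c ^ 3) + (4/5) * (s ^ 0 * c ^ 5) + (-4/45) * (s ^ 1 * c ^ 0) + (-28/15) * (s ^ 1 * c ^ 2) + (-8/3) * (s ^ 1 * c ^ 4) + (-17/45) * (s ^ 1 * c ^ 6) + (58/135) * (s ^ 2 * c ^ 1) + (88/45) * (s ^ 2 * c ^ 3) + (22/15) * (s ^ 2 * c ^ 5) + (4/27) * (s ^ 2 * c ^ 7) + (-4/225) * (s ^ 3 * c ^ 0) + (-472/675) * (s ^ 3 * c ^ 2) + (-359/225) * (s ^ 3 * c ^ 4) + (-16/25) * (s ^ 3 * c ^ 6) + (-32/675) * (s ^ 3 * c ^ 8) + (68/675) * (s ^ 4 * c ^ 1) + (478/675) * (s ^ 4 * c ^ 3) + (24/25) * (s ^ 4 * c ^ 5) + (148/675) * (s ^ 4 * c ^ 7) + (8/675) * (s ^ 4 * c ^ 9) + (-289/2025) * (s ^ 5 * c ^ 2) + (-884/2025) * (s ^ 5 * c ^ 4) + (-248/675) * (s ^ 5 * c ^ 6) + (-104/2025) * (s ^ 5 * c ^ 8) + (-4/2025) * (s ^ 5 * c ^ 10).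
Ltac atoms_g1r s c Hs Hc := pose proof (atom_bd s c 0 1 Hs Hc); pose proof (atom_bd s c 1 0 Hs Hc); pose proof (atom_bd s c 1 2 Hs Hc); pose proof (atom_bd s c 2 1 Hs Hc); pose proof (atom_bd s c 2 3 Hs Hc); pose proof (atom_bd s c 3 0 Hs Hc); pose proof (atom_bd s c 3 2 Hs Hc); pose proof (atom_bd s c 3 4 Hs Hc); pose proof (atom_bd s c 4 1 Hs Hc); pose proof (atom_bd s c 4 3 Hs Hc); pose proof (atom_bd s c 4 5 Hs Hc).
Ltac atoms_rho1 s c Hs Hc := pose proof (atom_bd s c 0 1 Hs Hc); pose proof (atom_bd s c 0 3 Hs Hc); pose proof (atom_bd s c 0 5 Hs Hc); pose proof (atom_bd s c 1 0 Hs Hc); pose proof (atom_bd s c 1 2 Hs Hc); pose proof (atom_bd s c 1 4 Hs Hc); pose proof (atom_bd s c 1 6 Hs Hc); pose proof (atom_bd s c 2 1 Hs Hc); pose proof (atom_bd s c 2 3 Hs Hc); pose proof (atom_bd s c 2 5 Hs Hc); pose proof (atom_bd s c 2 7 Hs Hc); pose proof (atom_bd s c 3 0 Hs Hc); pose proof (atom_bd s c 3 2 Hs Hc); pose proof (atom_bd s c 3 4 Hs Hc); pose proof (atom_bd s c 3 6 Hs Hc); pose proof (atom_bd s c 3 8 Hs Hc); pose proof (atom_bd s c 4 1 Hs Hc); pose proof (atom_bd s c 4 3 Hs Hc); pose proof (atom_bd s c 4 5 Hs Hc); pose proof (atom_bd s c 4 7 Hs Hc); pose proof (atom_bd s c 4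 9 Hs Hc); pose proof (atom_bd s c 5 2 Hs Hc); pose proof (atom_bd s c 5 4 Hs Hc); pose proof (atom_bd s c 5 6 Hs Hc); pose proof (atom_bd s c 5 8 Hs Hc); pose proof (atom_bd s c 5 10 Hs Hc).

Definition rrQ (c s : R) : R := c ^ 2 - 1 - (G1Q c s) ^ 2 - G2Q c s.
Definition GpQ (c s : R) : R := c * s + s ^ 2 * Qpoly s c.

Lemma G1_split c s : G1Q c s = c - s + s ^ 2 * g1rQ c s.
Proof. unfold G1Q, g1rQ. ring. Qed.
Lemma rr_split c s : rrQ c s = s ^ 6 * (p0Q c + s * rho1Q c s).
Proof. unfold rrQ, G1Q, G2Q, p0Q, rho1Q. field. Qed.

Lemma g1r_bd c s : Rabs s <= 1 -> 0 <= c <= 1 -> Rabs (g1rQ c s) <= 5.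
Proof. intros Hs Hc. atoms_g1r s c Hs Hc. unfold g1rQ. apply Rabs_le. lra. Qed.
Lemma rho1_bd c s : Rabs s <= 1 -> 0 <= c <= 1 -> Rabs (rho1Q c s) <= 21.
Proof. intros Hs Hc. atoms_rho1 s c Hs Hc. unfold rho1Q. apply Rabs_le. lra. Qed.
Lemma p0_bd c : 0 <= c <= 1 -> -7 <= p0Q c <= 0.
Proof.
  intros Hc. assert (Hs : Rabs 0 <= 1) by (rewrite Rabs_R0; lra).
  pose proof (atom_bd 0 c 0 2 Hs Hc). pose proof (atom_bd 0 c 0 4 Hs Hc). pose proof (atom_bd 0 c 0 6 Hs Hc).
  assert (0 <= c ^ 2) by (apply pow_le; lra).
  assert (0 <= c ^ 4) by (apply pow_le; lra).
  assert (0 <= c ^ 6) by (apply pow_le; lra).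
  simpl pow in *. unfold p0Q. simpl pow. lra.
Qed.

Lemma G1_bd c s : Rabs s <= / 1000 -> 0 <= c <= 1 -> Rabs (G1Q c s) <= 11 / 10.
Proof.
  intros Hs Hc. rewrite G1_split.
  assert (H := g1r_bd c s ltac:(lra) Hc).
  assert (Hs2 : Rabs (s ^ 2 * g1rQ c s) <= / 1000 * 5).
  { rewrite Rabs_mult, <- RPow_abs. simpl. 
    assert (0 <= Rabs s) by apply Rabs_pos. assert (0 <= Rabs (g1rQ c s)) by apply Rabs_pos. nra. }
  apply Rabs_le_between in Hs2. apply Rabs_le_between in Hs. apply Rabs_le. lra.
Qed.

Lemma rr_bd c s : Rabs s <= / 1000 -> 0 <= c <= 1 -> Rabs (rrQ c s) <= 8 * Rabs s ^ 6.
Proof.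
  intros Hs Hc. rewrite rr_split, Rabs_mult, <- RPow_abs.
  assert (H := rho1_bd c s ltac:(lra) Hc). assert (H0 := p0_bd c Hc).
  assert (0 <= Rabs s ^ 6) by (apply pow_le, Rabs_pos).
  rewrite (Rmult_comm 8). apply Rmult_le_compat_l; auto.
  rewrite Rmult_comm. eapply Rle_trans. apply Rabs_triang. rewrite Rabs_mult.
  assert (0 <= Rabs s) by apply Rabs_pos. assert (0 <= Rabs (rho1Q c s)) by apply Rabs_pos.
  assert (Rabs s * Rabs (rho1Q c s) <= 1) by nra.
  rewrite Rabs_left1 by lra. lra.
Qed.

Lemma Gp_der c s : is_derive (GpQ c) s (G1Q c s).
Proof. unfold GpQ, Qpoly, G1Q. auto_derive; auto. field. Qed.
Lemma G1_der c s : is_derive (fun s => G1Q c s) s (G2Q c s).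
Proof. unfold G2Q, G1Q. auto_derive; auto. field. Qed.

Lemma sin_abs x : Rabs (sin x) <= Rabs x.
Proof.
  assert (H := integ_sym sin cos (Rabs x) 0 1 0 (fun s _ => proj2 (is_derive_Reals _ _ _) (derivable_pt_lim_sin s)) sin_0).
  assert (H' : Rabs (sin x) <= 0 * Rabs x ^ 1 / INR 1 + 1 * Rabs x).
  { apply H; [|lra]. intros s _. simpl. pose proof (COS_bound s). apply Rabs_le. lra. }
  simpl in H'. lra.
Qed.

Lemma cos_lb x : 1 - x ^ 2 / 2 <= cos x.
Proof.
  replace x with (2 * (x / 2)) at 2 by field. rewrite cos_2a_sin.
  pose proof (Rsqr_le_abs_1 _ _ (sin_abs (x / 2))). unfold Rsqr in H.
  simpl. lra.
Qed.

Lemma sig_sq c : 0 <= c <= 1 -> sigmaQ c ^ 2 = 1 - c ^ 2.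
Proof. intros Hc. unfold sigmaQ. rewrite pow2_sqrt; [ring|nra]. Qed.
Lemma sig_bd c : 0 <= c <= 1 -> 0 <= sigmaQ c <= 1.
Proof.
  intros Hc. unfold sigmaQ. split. apply sqrt_pos. apply Rle_trans with (sqrt 1); [apply sqrt_le_1_alt; nra | rewrite sqrt_1; lra].
Qed.
Lemma sig0 c : 0 <= c <= 1 -> sigmaQ c = 0 -> c = 1.
Proof. intros Hc H. pose proof (sig_sq c Hc). rewrite H in H0. nra. Qed.

Lemma csin_der c s : 0 <= c <= 1 -> is_derive (fun s => csin s c) s (c * cos (s * sigmaQ c)).
Proof.
  intros Hc. unfold csin. destruct (Req_dec_T (sigmaQ c) 0) as [H|H].
  - rewrite H, (sig0 c Hc H), Rmult_0_r, cos_0, Rmult_1_l. exact (is_derive_id s).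
  - auto_derive; auto. field. auto.
Qed.

Lemma csin_sig c s : 0 <= c <= 1 -> sigmaQ c ^ 2 * csin s c = c * sigmaQ c * sin (s * sigmaQ c).
Proof.
  intros Hc. unfold csin. destruct (Req_dec_T (sigmaQ c) 0) as [H|H].
  - rewrite H. ring.
  - field. auto.
Qed.

Lemma csin_abs c s : 0 <= c <= 1 -> Rabs (csin s c) <= Rabs s.
Proof.
  intros Hc. unfold csin. destruct (Req_dec_T (sigmaQ c) 0) as [H|H].
  - lra.
  - pose proof (sig_bd c Hc). assert (0 < sigmaQ c) by lra.
    rewrite Rabs_mult. pose proof (sin_abs (s * sigmaQ c)).
    rewrite Rabs_mult, (Rabs_right (sigmaQ c)) in H2 by lra.
    rewrite Rabs_right by (apply Rle_ge, Rdiv_le_0_compat; lra).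
    assert (0 <= Rabs s) by apply Rabs_pos.
    apply Rle_trans with (c / sigmaQ c * (Rabs s * sigmaQ c)).
    + apply Rmult_le_compat_l; auto. apply Rdiv_le_0_compat; lra.
    + replace (c / sigmaQ c * (Rabs s * sigmaQ c)) with (c * Rabs s) by (field; lra). nra.
Qed.

Definition fQ (c s : R) : R := csin s c + cos (s * sigmaQ c).
Definition fpQ (c s : R) : R := - sigmaQ c * sin (s * sigmaQ c) + c * cos (s * sigmaQ c).

Lemma fQ_der c s : 0 <= c <= 1 -> is_derive (fQ c) s (fpQ c s).
Proof.
  intros Hc.
  assert (H2 : is_derive (fun s => cos (s * sigmaQ c)) s (- sigmaQ c * sin (s * sigmaQ c))) by (auto_derive; auto; ring).
  replace (fpQ c s) with (c * cos (s * sigmaQ c) + - sigmaQ c * sin (s * sigmaQ c)) by (unfold fpQ; ring).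
  exact (is_derive_plus _ _ _ _ _ (csin_der c s Hc) H2).
Qed.

Lemma fpQ_der c s : 0 <= c <= 1 -> is_derive (fpQ c) s (- (sigmaQ c ^ 2) * fQ c s).
Proof.
  intros Hc. unfold fpQ, fQ. auto_derive; auto.
  replace (- (sigmaQ c ^ 2) * (csin s c + cos (s * sigmaQ c))) with (- (sigmaQ c ^ 2 * csin s c) - sigmaQ c ^ 2 * cos (s * sigmaQ c)) by ring.
  rewrite csin_sig by auto. ring.
Qed.

Lemma fQ_lb c s : 0 <= c <= 1 -> Rabs s <= / 1000 -> 9 / 10 <= fQ c s.
Proof.
  intros Hc Hs. unfold fQ. pose proof (cos_lb (s * sigmaQ c)). pose proof (csin_abs c s Hc).
  pose proof (sig_bd c Hc). apply Rabs_le_between in H0. pose proof Hs as Hs'. apply Rabs_le_between in Hs'.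
  assert ((s * sigmaQ c) ^ 2 <= / 1000).
  { rewrite Rpow_mult_distr. assert (s ^ 2 <= / 1000) by (simpl; nra). assert (sigmaQ c ^ 2 <= 1) by (simpl; nra).
    assert (0 <= s ^ 2) by (simpl; nra). nra. }
  lra.
Qed.

Lemma fpQ_bd c s : 0 <= c <= 1 -> Rabs (fpQ c s) <= 2.
Proof.
  intros Hc. unfold fpQ. pose proof (sig_bd c Hc). pose proof (SIN_bound (s * sigmaQ c)). pose proof (COS_bound (s * sigmaQ c)).
  assert (-1 <= sigmaQ c * sin (s * sigmaQ c) <= 1) by (split; nra).
  assert (-1 <= c * cos (s * sigmaQ c) <= 1) by (split; nra).
  apply Rabs_le. lra.
Qed.

Lemma fQ_0 c : fQ c 0 = 1.
Proof. unfold fQ, csin. rewrite Rmult_0_l, cos_0. destruct (Req_dec_T (sigmaQ c) 0); [|rewrite sin_0]; ring. Qed.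

Lemma is_derive_val (f : R -> R) x l l' : is_derive f x l -> l = l' -> is_derive f x l'.
Proof. intros H ->. exact H. Qed.

Lemma pow_abs_le s T n : Rabs s <= T -> Rabs s ^ n <= T ^ n.
Proof. intros H. apply pow_incr. split; [apply Rabs_pos|exact H]. Qed.

Lemma part2 c tau : 0 <= c <= 1 -> 0 < Rabs tau <= / 1000 ->
  Rabs (Qpoly tau c - Q tau c) <= / (10 ^ 18).
Proof.
  intros Hc [Ht0 Ht].
  set (T := Rabs tau) in *.
  set (u := fun s => fpQ c s / fQ c s).
  set (e := fun s => u s - G1Q c s).
  set (D := fun s => ln (fQ c s) - GpQ c s).
  set (e' := fun s => rrQ c s - (u s + G1Q c s) * e s).
  assert (HT0 : 0 <= T) by lra.
  assert (Hf : forall s, Rabs s <= T -> 9 / 10 <= fQ c s) by (intros; apply fQ_lb; lra).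
  assert (HD : forall s, Rabs s <= T -> is_derive D s (e s)).
  { intros s Hs. pose proof (Hf s Hs).
    assert (Hl : is_derive (fun x => ln (fQ c x)) s (fpQ c s / fQ c s)).
    { exact (is_derive_comp ln (fQ c) s (/ fQ c s) (fpQ c s)
               (proj2 (is_derive_Reals _ _ _) (derivable_pt_lim_ln (fQ c s) ltac:(lra))) (fQ_der c s Hc)). }
    exact (is_derive_minus _ _ _ _ _ Hl (Gp_der c s)). }
  assert (He : forall s, Rabs s <= T -> is_derive e s (e' s)).
  { intros s Hs. pose proof (Hf s Hs).
    eapply is_derive_val.
    exact (is_derive_minus _ _ _ _ _ (is_derive_div _ _ s _ _ (fpQ_der c s Hc) (fQ_der c s Hc) ltac:(lra)) (G1_der c s)).
    unfold minus, plus, opp; simpl. unfold e', e, u, rrQ. replace (sigmaQ c * (sigmaQ c * 1)) with (1 - c ^ 2) by (rewrite <- sig_sq by auto; ring). field. lra. }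
  assert (Hub : forall s, Rabs s <= T -> Rabs (u s + G1Q c s) <= 4).
  { intros s Hs. pose proof (Hf s Hs). pose proof (fpQ_bd c s Hc). pose proof (G1_bd c s ltac:(lra) Hc).
    assert (Hus : u s * fQ c s = fpQ c s) by (unfold u; field; lra).
    apply Rabs_le_between in H0. apply Rabs_le_between in H1.
    assert (-20/9 <= u s <= 20/9) by (split; nra).
    apply Rabs_le. lra. }
  assert (Hbnd : forall s, Rabs s <= T -> Rabs (e' s) <= 8 * Rabs s ^ 6 + 4 * Rabs (e s)).
  { intros s Hs. unfold e'. eapply Rle_trans. apply Rabs_triang. rewrite Rabs_Ropp, Rabs_mult.
    pose proof (rr_bd c s ltac:(lra) Hc). pose proof (Hub s Hs). pose proof (Rabs_pos (e s)). nra. }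
  assert (He0 : e 0 = 0).
  { unfold e, u. rewrite fQ_0. unfold fpQ, G1Q. rewrite Rmult_0_l, sin_0, cos_0. simpl. field. }
  assert (HD0 : D 0 = 0).
  { unfold D. rewrite fQ_0, ln_1. unfold GpQ. ring. }
  assert (Hcont : forall s, -T <= s <= T -> continuity_pt (fun s => Rabs (e s)) s).
  { intros s Hs. assert (Hs' : Rabs s <= T) by (apply Rabs_le; lra).
    apply (continuity_pt_comp e Rabs). eapply cont_of_der. apply He; auto. apply Rcontinuity_abs. }
  destruct (continuity_ab_maj (fun s => Rabs (e s)) (-T) T ltac:(lra) Hcont) as [Mx [HMx HMxI]].
  set (E := Rabs (e Mx)).
  assert (HMxT : Rabs Mx <= T) by (apply Rabs_le; lra).
  assert (HE : E <= 9 * T ^ 7).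
  { assert (H := integ_sym e e' T 0 (8 * T ^ 6 + 4 * E) 0 He He0).
    assert (H1 : Rabs (e Mx) <= 0 * Rabs Mx ^ 1 / INR 1 + (8 * T ^ 6 + 4 * E) * Rabs Mx).
    { apply H; auto. intros s Hs. eapply Rle_trans. apply Hbnd; auto.
      pose proof (pow_abs_le s T 6 Hs). assert (Rabs (e s) <= E) by (apply HMx; apply Rabs_le_between; auto).
      simpl pow. lra. }
    fold E in H1. simpl in H1.
    assert (0 <= E) by apply Rabs_pos. assert (0 <= T ^ 6) by (apply pow_le; lra).
    assert (HE2 : E <= (8 * T ^ 6 + 4 * E) * T).
    { assert (HE1 : E <= (8 * T ^ 6 + 4 * E) * Rabs Mx) by lra.
      eapply Rle_trans. exact HE1. apply Rmult_le_compat_l; nra. }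
    replace (T ^ 7) with (T ^ 6 * T) by ring. nra. }
  assert (HB : forall s, Rabs s <= T -> Rabs (e s) <= 8 / 7 * Rabs s ^ 7 + 36 * T ^ 8).
  { intros s Hs. assert (H := integ_sym e e' T 8 (36 * T ^ 7) 6 He He0).
    assert (H1 : Rabs (e s) <= 8 * Rabs s ^ 7 / INR 7 + 36 * T ^ 7 * Rabs s).
    { apply H; auto. intros x Hx. eapply Rle_trans. apply Hbnd; auto.
      assert (Rabs (e x) <= E) by (apply HMx; apply Rabs_le_between; auto). lra. }
    replace (INR 7) with 7 in H1 by (simpl; ring).
    assert (0 <= T ^ 7) by (apply pow_le; lra).
    assert (T ^ 7 * Rabs s <= T ^ 8) by (replace (T ^ 8) with (T ^ 7 * T) by ring; apply Rmult_le_compat_l; auto).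
    lra. }
  assert (HC : Rabs (D tau) <= 8 / 7 * T ^ 8 / INR 8 + 36 * T ^ 8 * T).
  { apply (integ_sym D e T (8/7) (36 * T ^ 8) 7 HD HD0); [|unfold T; lra].
    intros s Hs. apply HB; auto. }
  replace (INR 8) with 8 in HC by (simpl; ring).
  assert (Htau : tau <> 0) by (intro H; unfold T in Ht0; rewrite H, Rabs_R0 in Ht0; lra).
  assert (Heq : Qpoly tau c - Q tau c = - D tau / tau ^ 2).
  { unfold D, Q, GpQ, fQ. field. auto. }
  rewrite Heq. unfold Rdiv. rewrite Rabs_mult, Rabs_Ropp, Rabs_inv, <- RPow_abs. fold T.
  assert (HT2 : 0 < T ^ 2) by (apply pow_lt; lra).
  assert (HT6 : T ^ 6 <= / 10 ^ 18).
  { replace (/ 10 ^ 18) with ((/ 1000) ^ 6) by field. apply pow_incr. lra. }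
  assert (0 <= T ^ 6) by (apply pow_le; lra).
  apply Rle_trans with ((8 / 7 * T ^ 8 / 8 + 36 * T ^ 8 * T) * / T ^ 2).
  { apply Rmult_le_compat_r; auto. left. apply Rinv_0_lt_compat; auto. }
  replace ((8 / 7 * T ^ 8 / 8 + 36 * T ^ 8 * T) * / T ^ 2) with (T ^ 6 * (/ 7 + 36 * T)) by (field; lra).
  nra.
Qed.

Lemma part1 (c0 c1 a v0 : R) : 0 <= c0 -> 0 < c1 -> a < 0 -> 0 <= v0 ->
     c0 ^ 2 + 4 * a * c1 < 0 ->
     forall (alpha beta : R) (v : R -> R), alpha < 0 < beta ->
       (forall x, alpha < x < beta ->
          derivable_pt_lim v x (a - c0 * v x - c1 * (v x) ^ 2)) ->
       v 0 = v0 ->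
       forall t, alpha < t < beta -> t <> 0 ->
         forall pr : Riemann_integrable v 0 t,
           RiemannInt pr =
             (A0 c0 c1 v0 + Rabs a) * t ^ 2
               * Q (t * ell1 a c0 c1 v0) (cos_theta1 a c0 c1 v0)
             + v0 * t.
Proof.
  intros Hc0 Hc1 Ha Hv0 Hdisc alpha beta v Hab Hder Hv00 t Ht Htn pr.
  set (W := absw a c0 c1).
  assert (HW2 : W ^ 2 = - (c0 ^ 2 + 4 * a * c1)) by (unfold W, absw; apply pow2_sqrt; lra).
  assert (HWp : 0 < W) by (unfold W, absw; apply sqrt_lt_R0; lra).
  set (om := W / 2).
  assert (Hom : 0 < om) by (unfold om; lra).
  set (y := fun x => c1 * v x + c0 / 2).
  set (y0 := c1 * v0 + c0 / 2).
  set (th0 := atan (y0 / om)).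
  assert (Hvd : forall x, alpha < x < beta -> is_derive v x (a - c0 * v x - c1 * (v x) ^ 2))
    by (intros; apply is_derive_Reals; auto).
  assert (HZ : forall x, alpha < x < beta -> atan (y x / om) = th0 - om * x).
  { intros x Hx.
    set (Z := fun x => atan (y x / om) + om * x).
    assert (HZd : forall z, alpha < z < beta -> is_derive Z z 0).
    { intros z Hz. unfold Z, y. auto_derive.
      - eexists. apply Hvd; auto.
      - replace (Derive (fun x0 => v x0) z) with (a - c0 * v z - c1 * v z ^ 2)
          by (symmetry; apply is_derive_unique; apply Hvd; auto).
        assert (Hkey : c1 * (a - c0 * v z - c1 * v z ^ 2) = - om ^ 2 - (c1 * v z + c0 / 2) ^ 2).
        { unfold om. replace ((W / 2) ^ 2) with (W ^ 2 / 4) by field. rewrite HW2. field. }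
        replace (c1 * (1 * (a - c0 * v z - c1 * v z ^ 2))) with (- om ^ 2 - (c1 * v z + c0 / 2) ^ 2) by (rewrite <- Hkey; ring).
        set (yy := c1 * v z + c0 / 2).
        assert (0 <= yy ^ 2) by apply pow2_ge_0.
        field. split. lra. replace (om * om + yy * yy) with (om ^ 2 + yy ^ 2) by ring.
        assert (0 < om ^ 2) by (apply pow_lt; lra). lra. }
    assert (Hin : forall z, Rmin 0 x <= z <= Rmax 0 x -> alpha < z < beta).
    { intros z Hz. unfold Rmin, Rmax in Hz. destruct (Rle_dec 0 x); lra. }
    destruct (MVT_gen Z 0 x (fun _ => 0)) as [xi [_ Hxi]].
    - intros z Hz. apply HZd, Hin. lra.
    - intros z Hz. eapply cont_of_der. apply HZd, Hin. exact Hz.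
    - unfold Z in Hxi. unfold y in Hxi. rewrite Hv00 in Hxi. fold y0 th0 in Hxi. unfold y. lra. }
  assert (Hy : forall x, alpha < x < beta -> y x = om * tan (th0 - om * x)).
  { intros x Hx. rewrite <- HZ by auto. rewrite tan_atan. field. lra. }
  assert (Hcos : forall x, alpha < x < beta -> 0 < cos (th0 - om * x)).
  { intros x Hx. rewrite <- HZ by auto. pose proof (atan_bound (y x / om)). apply cos_gt_0; lra. }
  assert (Hcos0 : 0 < cos th0).
  { replace th0 with (th0 - om * 0) by ring. apply Hcos. lra. }
  set (S := fun x => (ln (cos (th0 - om * x)) - c0 * x / 2) / c1).
  assert (HS : forall x, alpha < x < beta -> is_derive S x (v x)).
  { intros x Hx. pose proof (Hcos x Hx). pose proof (Hy x Hx). unfold y, tan in H0.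
    unfold S. auto_derive. unfold Rminus in H; exact H.
    replace (th0 + - (om * x)) with (th0 - om * x) by ring.
    replace (v x) with ((om * (sin (th0 - om * x) / cos (th0 - om * x)) - c0 / 2) / c1) by (rewrite <- H0; field; lra).
    field. lra. }
  assert (Hint : RiemannInt pr = S t - S 0).
  { rewrite <- RInt_Reals. apply is_RInt_unique.
    assert (Hin : forall z, Rmin 0 t <= z <= Rmax 0 t -> alpha < z < beta).
    { intros z Hz. unfold Rmin, Rmax in Hz. destruct (Rle_dec 0 t); lra. }
    apply (is_RInt_derive S v).
    - intros x Hx. apply HS, Hin, Hx.
    - intros x Hx. apply continuity_pt_filterlim. eapply cont_of_der. apply Hvd, Hin, Hx. }
  rewrite Hint. unfold S.
  set (l := ell1 a c0 c1 v0).
  assert (HA : 0 <= A0 c0 c1 v0) by (unfold A0; apply Rmult_le_pos; nra).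
  assert (Hl2 : l ^ 2 = c1 * (A0 c0 c1 v0 + Rabs a)).
  { unfold l, ell1. apply pow2_sqrt. pose proof (Rabs_pos a). nra. }
  assert (Hlp : 0 < l).
  { unfold l, ell1. apply sqrt_lt_R0. rewrite Rabs_left by lra. nra. }
  set (c := cos_theta1 a c0 c1 v0).
  assert (Hcd : c = (2 * c1 * v0 + c0) / (2 * l)) by reflexivity.
  assert (Hsig : sigmaQ c = W / (2 * l)).
  { unfold sigmaQ. rewrite <- (sqrt_pow2 (W / (2 * l))) by (apply Rlt_le, Rdiv_lt_0_compat; lra).
    f_equal. rewrite Hcd.
    replace (((2 * c1 * v0 + c0) / (2 * l)) ^ 2) with ((2 * c1 * v0 + c0) ^ 2 / (4 * l ^ 2)) by (field; lra).
    replace ((W / (2 * l)) ^ 2) with (W ^ 2 / (4 * l ^ 2)) by (field; lra).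
    rewrite Hl2, HW2. unfold A0. rewrite Rabs_left by lra. field. split; [|lra].
    assert (0 <= (c1 * v0 + c0) * v0) by (apply Rmult_le_pos; nra). lra. }
  assert (Hsig0 : sigmaQ c <> 0) by (rewrite Hsig; apply Rgt_not_eq, Rdiv_lt_0_compat; lra).
  unfold Q, csin. destruct (Req_dec_T (sigmaQ c) 0) as [Hs0|_]; [contradiction|].
  rewrite Hsig.
  replace (t * l * (W / (2 * l))) with (om * t) by (unfold om; field; lra).
  replace (c / (W / (2 * l))) with (y0 / om) by (rewrite Hcd; unfold y0, om; field; lra).
  assert (Harg : y0 / om * sin (om * t) + cos (om * t) = cos (th0 - om * t) / cos th0).
  { rewrite cos_minus. unfold th0. pose proof (tan_atan (y0 / om)) as Ht0. unfold tan in Ht0.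
    rewrite <- Ht0 at 1. fold th0. field. lra. }
  rewrite Harg, ln_div by (auto; apply Hcos; auto).
  replace (A0 c0 c1 v0 + Rabs a) with (l ^ 2 / c1) by (rewrite Hl2; field; lra).
  rewrite Hcd. replace (th0 - om * 0) with th0 by ring.
  field. repeat split; lra.
Qed.

Theorem mainTheorem10 :
  (forall (c0 c1 a v0 : R), 0 <= c0 -> 0 < c1 -> a < 0 -> 0 <= v0 ->
     c0 ^ 2 + 4 * a * c1 < 0 ->
     forall (alpha beta : R) (v : R -> R), alpha < 0 < beta ->
       (forall x, alpha < x < beta ->
          derivable_pt_lim v x (a - c0 * v x - c1 * (v x) ^ 2)) ->
       v 0 = v0 ->
       forall t, alpha < t < beta -> t <> 0 ->
         forall pr : Riemann_integrable v 0 t,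
           RiemannInt pr =
             (A0 c0 c1 v0 + Rabs a) * t ^ 2
               * Q (t * ell1 a c0 c1 v0) (cos_theta1 a c0 c1 v0)
             + v0 * t)
  /\
  (forall c tau, 0 <= c <= 1 -> 0 < Rabs tau <= / 1000 ->
     Rabs (Qpoly tau c - Q tau c) <= / (10 ^ 18)).
Proof.
  split.
  - exact part1.
  - exact part2.
Qed.
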